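(* Let $m,\delta,\gamma>0$ and let $\Gamma(x,y,z,u):=\frac{\Psi(x,z,u,\delta,\gamma)}{\langle Kx,y\rangle-f^*(y)}$ be defined on $\{(x,y)\in\mathbb{R}^n\times\operatorname{dom}f^*:\langle Kx,y\rangle-f^*(y)>m/2\}\times\operatorname{dom}g^*\times\mathbb{R}^n$. Suppose that $f^*$ is calm at $\hat y\in\operatorname{dom}f^*$, that $\hat x\in\mathcal{S}$ satisfies $\langle K\hat x,\hat y\rangle-f^*(\hat y)>m/2$, that $g^*$ is differentiable at $\hat z\in\operatorname{int}(\operatorname{dom}g^* )$, and let $\hat u\in\mathbb{R}^n$. Put $\alpha_1:=\Psi(\hat x,\hat z,\hat u,\delta,\gamma)$, $\alpha_2:=\langle K\hat x,\hat y\rangle-f^*(\hat y)$, and suppose $\alpha_1>0$. Then there exist open sets $\mathcal{O}_1\subseteq\mathbb{R}^n$, $\mathcal{O}_2\subseteq\operatorname{dom}f^*$, $\mathcal{O}_3\subseteq\operatorname{dom}g^*$ with $\hat x\in\mathcal{O}_1$, $\hat y\in\mathcal{O}_2$, $\hat z\in\mathcal{O}_3$, such that $\langle Kx,y\rangle-f^*(y)>m/2$ for all $(x,y)\in\mathcal{O}_1\times\mathcal{O}_2$, and the Fréchet subdifferential $\hat\partial\Gamma(\hat x,\hat y,\hat z,\hat u)$ equals the set of all $(\xi_x,\xi_y,\xi_z,\xi_u)$ with $\xi_x\in\frac{\alpha_2\left(A^*\hat z+\nabla h(\hat x)+\partial\iota_{\mathcal{S}}(\hat x)+\delta(\hat x-\hat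 u)\right)-\alpha_1K^*\hat y}{(\langle K\hat x,\hat y\rangle-f^*(\hat y))^2}$, $\xi_y\in\frac{\alpha_1(\partial f^*(\hat y)-K\hat x)}{(\langle K\hat x,\hat y\rangle-f^*(\hat y))^2}$, $\xi_z=\frac{A\hat x-\nabla g^*(\hat z)-\gamma\hat z}{\langle K\hat x,\hat y\rangle-f^*(\hat y)}$, $\xi_u=\frac{\delta(\hat u-\hat x)}{\langle K\hat x,\hat y\rangle-f^*(\hat y)}$.
   Context: $\mathcal{S}\subseteq\mathbb{R}^n$ nonempty, convex, compact; $A:\mathbb{R}^n\to\mathbb{R}^s$, $K:\mathbb{R}^n\to\mathbb{R}^p$ linear with adjoints $A^*,K^*$; $g:\mathbb{R}^s\to\mathbb{R}\cup\{+\infty\}$ proper, convex, lsc; $h:\mathbb{R}^n\to\mathbb{R}$ differentiable on an open set containing $\mathcal{S}$ with Lipschitz gradient there; $f:\mathbb{R}^p\to\mathbb{R}\cup\{+\infty\}$ proper, convex, lsc with $K(\mathcal{S})\subseteq\operatorname{int}(\operatorname{dom}f)$ and $f(Kx)>0$ on $\mathcal{S}$; $\mathcal{S}\cap A^{-1}(\operatorname{dom}g)\ne\emptyset$ and $\inf_{x\in\mathcal{S}}\{g(Ax)+h(x)\}>0$. $f^*,g^*$ are Fenchel conjugates, $\iota_{\mathcal{S}}$ the indicator of $\mathcal{S}$, $\partial$ the convex subdifferential, $\Psi(x,z,u,\delta,\gamma):=\langle z,Ax\rangle-g^*(z)+h(x)+\iota_{\mathcal{S}}(x)+\frac{\delta}{2}\|x-u\|^2-\frac{\gamma}{2}\|z\|^2$.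 A function $\varphi$ is calm at $\hat y\in\operatorname{dom}\varphi$ if there are $\epsilon,\kappa>0$ with $|\varphi(y)-\varphi(\hat y)|\le\kappa\|y-\hat y\|$ for all $y$ with $\|y-\hat y\|<\epsilon$. The Fréchet subdifferential is $\hat\partial\varphi(\bar w)=\{v:\liminf_{w\to\bar w,w\ne\bar w}\frac{\varphi(w)-\varphi(\bar w)-\langle v,w-\bar w\rangle}{\|w-\bar w\|}\ge0\}$. *)

(* Defs.v *)
(* R^k is modelled as column vectors 'cV[R]_k,
   linear maps as matrices, extended-real valued functions take values in \bar R. *)
From mathcomp Require Import all_boot all_order all_algebra.
From mathcomp Require Import all_classical all_reals all_analysis.
Import Order.TTheory GRing.Theory Num.Theory.
Import numFieldNormedType.Exports.
Set Implicit Arguments. Unset Strict Implicit. Unset Printing Implicit Defensive.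
Local Open Scope ring_scope.
Local Open Scope classical_set_scope.

Section Defs.
Variable R : realType.
Notation vec k := 'cV[R]_k.

Definition dotv {k} (u v : vec k) : R := \sum_(i < k) u i 0 * v i 0.
Definition enorm {k} (u : vec k) : R := Num.sqrt (dotv u u).

Definition edom {k} (phi : vec k -> \bar R) : set (vec k) := [set x | (phi x < +oo)%E].

Definition eproper {k} (phi : vec k -> \bar R) : Prop :=
  (forall x, phi x != -oo%E) /\ exists x, phi x \is a fin_num.

Definition cvx_set {k} (S : set (vec k)) : Prop :=
  forall x y (t : R), S x -> S y -> 0 <= t <= 1 -> S (t *: x + (1 - t) *: y).

Definition convex_efun {k} (phi : vec k -> \bar R) : Prop :=
  forall x y (t : R), (phi x < +oo)%E -> (phi y < +oo)%E -> 0 <= t <= 1 ->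
    (phi (t *: x + (1 - t) *: y)%R <= t%:E * phi x + (1 - t)%:E * phi y)%E.

Definition elsc {k} (phi : vec k -> \bar R) : Prop :=
  forall x (a : R), (a%:E < phi x)%E ->
    exists2 eps : R, 0 < eps & forall y, enorm (y - x) < eps -> (a%:E < phi y)%E.

Definition fconj {k} (phi : vec k -> \bar R) (y : vec k) : \bar R :=
  ereal_sup [set ((dotv x y)%:E - phi x)%E | x in [set: vec k]].

Definition ind_fun {k} (S : set (vec k)) (x : vec k) : \bar R :=
  if `[< S x >] then 0%E else +oo%E.

Definition subdiff {k} (phi : vec k -> \bar R) (x : vec k) : set (vec k) :=
  [set v | phi x \is a fin_num /\
           forall y, (phi x + (dotv v (y - x))%:E <= phi y)%E].

Definition is_grad {k} (phi : vec k -> \bar R) (x v : vec k) : Prop :=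
  phi x \is a fin_num /\
  forall eps : R, 0 < eps -> exists2 eta : R, 0 < eta &
    forall y, enorm (y - x) < eta ->
      (`| phi y - phi x - (dotv v (y - x))%:E | <= (eps * enorm (y - x))%:E)%E.

Definition calm {k} (phi : vec k -> \bar R) (y0 : vec k) : Prop :=
  phi y0 \is a fin_num /\
  exists eps kappa : R, [/\ 0 < eps, 0 < kappa &
    forall y, enorm (y - y0) < eps ->
      (`| phi y - phi y0 | <= (kappa * enorm (y - y0))%:E)%E].

(* Frechet subdifferential of a function of four vector arguments, on the
   Euclidean product space R^a x R^b x R^c x R^d; the liminf >= 0 condition
   is unfolded as: for all eps > 0, eventually the quotient is >= -eps. *)
Definition frechet4 {a b c d}
    (G : vec a -> vec b -> vec c -> vec d -> \bar R)
    (x : vec a) (y : vec b) (z : vec c) (u : vec d)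
  : set (vec a * vec b * vec c * vec d) :=
  [set xi | G x y z u \is a fin_num /\
    forall eps : R, 0 < eps -> exists2 eta : R, 0 < eta &
      forall x' y' z' u',
        let dist := Num.sqrt (enorm (x' - x) ^+ 2 + enorm (y' - y) ^+ 2 +
                              enorm (z' - z) ^+ 2 + enorm (u' - u) ^+ 2) in
        dist < eta ->
        ((- (eps * dist))%:E <=
           G x' y' z' u' - G x y z u
           - (dotv xi.1.1.1 (x' - x) + dotv xi.1.1.2 (y' - y)
              + dotv xi.1.2 (z' - z) + dotv xi.2 (u' - u))%:E)%E].

Definition Psi {n s} (A : 'M[R]_(s, n)) (g : vec s -> \bar R) (h : vec n -> R)
    (S : set (vec n)) (delta gamma : R) (x : vec n) (z : vec s) (u : vec n) : \bar R :=
  ((dotv z (A *m x))%:E - fconj g z + (h x)%:E + ind_fun S x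
   + (delta / 2 * enorm (x - u) ^+ 2)%:E - (gamma / 2 * enorm z ^+ 2)%:E)%E.

Definition denom {n p} (K : 'M[R]_(p, n)) (f : vec p -> \bar R) (x : vec n) (y : vec p)
  : \bar R := ((dotv (K *m x) y)%:E - fconj f y)%E.

(* Gamma, extended by +oo outside its domain
   {(x,y) in R^n x dom f^* : <Kx,y> - f^*(y) > m/2} x dom g^* x R^n *)
Definition Gamma {n p s} (A : 'M[R]_(s, n)) (K : 'M[R]_(p, n))
    (f : vec p -> \bar R) (g : vec s -> \bar R) (h : vec n -> R) (S : set (vec n))
    (m delta gamma : R) (x : vec n) (y : vec p) (z : vec s) (u : vec n) : \bar R :=
  if `[< [/\ (fconj f y < +oo)%E, ((m / 2)%:E < denom K f x y)%E
           & (fconj g z < +oo)%E] >]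
  then (Psi A g h S delta gamma x z u * ((fine (denom K f x y))^-1)%:E)%E
  else +oo%E.

End Defs.

(* Main.v *)
Require Import Defs.
From mathcomp Require Import all_boot all_order all_algebra.
From mathcomp Require Import all_classical all_reals all_analysis.
From mathcomp Require Import ring lra.
Import Order.TTheory GRing.Theory Num.Theory.
Import numFieldNormedType.Exports.
Local Open Scope ring_scope.
Local Open Scope classical_set_scope.
Set Implicit Arguments. Unset Strict Implicit. Unset Printing Implicit Defensive.

Section Vec.
Variable R : realType.

Lemma ballP k (x y : 'cV[R]_k) e :
  ball x e y <-> 0 < e /\ forall i, `|x i 0 - y i 0| < e.
Proof.
rewrite /ball /= /mx_ball; split=> -[e0 H]; split=> // i.
  by have := H i 0; rewrite /ball /=.
by move=> j; rewrite /ball /= (ord1 j); exact: H.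
Qed.

Variable k : nat.
Implicit Types u v w : 'cV[R]_k.

Lemma dotvDl u v w : dotv (u + v) w = dotv u w + dotv v w.
Proof. by rewrite /dotv -big_split; apply: eq_bigr => i _; rewrite !mxE mulrDl. Qed.
Lemma dotvC u v : dotv u v = dotv v u.
Proof. by apply: eq_bigr => i _; rewrite mulrC. Qed.
Lemma dotvDr u v w : dotv w (u + v) = dotv w u + dotv w v.
Proof. by rewrite dotvC dotvDl !(dotvC w). Qed.
Lemma dotvZl a u v : dotv (a *: u) v = a * dotv u v.
Proof. by rewrite /dotv mulr_sumr; apply: eq_bigr => i _; rewrite !mxE mulrA. Qed.
Lemma dotvZr a u v : dotv v (a *: u) = a * dotv v u.
Proof. by rewrite dotvC dotvZl dotvC. Qed.
Lemma dotvNl u v : dotv (- u) v = - dotv u v.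
Proof. by rewrite -scaleN1r dotvZl mulN1r. Qed.
Lemma dotvNr u v : dotv v (- u) = - dotv v u.
Proof. by rewrite dotvC dotvNl dotvC. Qed.
Lemma dotvBl u v w : dotv (u - v) w = dotv u w - dotv v w.
Proof. by rewrite dotvDl dotvNl. Qed.
Lemma dotvBr u v w : dotv w (u - v) = dotv w u - dotv w v.
Proof. by rewrite dotvDr dotvNr. Qed.
Lemma dotv0l u : dotv 0 u = 0.
Proof. by rewrite /dotv big1 // => i _; rewrite mxE mul0r. Qed.
Lemma dotv0r u : dotv u 0 = 0.
Proof. by rewrite dotvC dotv0l. Qed.

Lemma dotv_ge0 u : 0 <= dotv u u.
Proof. by apply: sumr_ge0 => i _; rewrite -expr2 sqr_ge0. Qed.
Lemma enorm_ge0 u : 0 <= enorm u.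
Proof. exact: sqrtr_ge0. Qed.
Lemma enorm_sq u : enorm u ^+ 2 = dotv u u.
Proof. by rewrite sqr_sqrtr // dotv_ge0. Qed.
Lemma enorm0 : enorm (0 : 'cV[R]_k) = 0.
Proof. by rewrite /enorm dotv0l sqrtr0. Qed.
Lemma enormZ a u : enorm (a *: u) = `|a| * enorm u.
Proof.
by rewrite /enorm dotvZl dotvZr mulrA -expr2 sqrtrM ?sqr_ge0 // sqrtr_sqr.
Qed.
Lemma enormN u : enorm (- u) = enorm u.
Proof. by rewrite /enorm dotvNl dotvNr opprK. Qed.

Lemma coord_le u i : `|u i 0| <= enorm u.
Proof.
rewrite -(sqrtr_sqr (u i 0)) /enorm ler_sqrt; last exact: dotv_ge0.
rewrite /dotv (bigD1 i) //= -expr2 lerDl sumr_ge0 // => j _.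
by rewrite -expr2 sqr_ge0.
Qed.

Lemma enorm_le_sum u : enorm u <= \sum_i `|u i 0|.
Proof.
have H0 : 0 <= \sum_i `|u i 0| by apply: sumr_ge0.
rewrite -(ger0_norm H0) -(sqrtr_sqr (\sum_i `|u i 0|)) /enorm ler_sqrt ?sqr_ge0 //.
rewrite /dotv expr2 mulr_suml; apply: ler_sum => i _.
rewrite mulr_sumr (bigD1 i) //= -normrM ler_wpDr ?real_ler_norm ?num_real //.
by apply: sumr_ge0 => j _; rewrite mulr_ge0.
Qed.

Lemma dotv_bound u v : `|dotv u v| <= k%:R * (enorm u * enorm v).
Proof.
apply: (le_trans (ler_norm_sum _ _ _)).
rewrite -[in X in X * _](card_ord k) -sumr_const mulr_suml; apply: ler_sum => i _.
rewrite mul1r.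
by rewrite normrM ler_pM ?coord_le.
Qed.

Lemma enorm_eq0 u : enorm u = 0 -> u = 0.
Proof.
move=> H; apply/matrixP => i j; rewrite (ord1 j) mxE.
apply/eqP; rewrite -normr_eq0 eq_le normr_ge0 andbT -H; exact: coord_le.
Qed.

Lemma sqrt_le_lem (a b : R) : 0 <= b -> a <= b ^+ 2 -> Num.sqrt a <= b.
Proof.
move=> b0 ab; have [a0|a0] := lerP 0 a.
  by rewrite -(ger0_norm b0) -sqrtr_sqr ler_sqrt // sqr_ge0.
by rewrite ltr0_sqrtr.
Qed.
End Vec.

Lemma dotv_trmx (R : realType) a b (A : 'M[R]_(a, b)) z x :
  dotv z (A *m x) = dotv (A^T *m z) x.
Proof.
rewrite /dotv; under eq_bigr do rewrite mxE big_distrr /=.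
under [RHS]eq_bigr do rewrite mxE big_distrl /=.
rewrite exchange_big /=; apply: eq_bigr => i _; apply: eq_bigr => j _.
by rewrite mxE; ring.
Qed.

Lemma mul_bound (R : realType) a b (A : 'M[R]_(a, b)) x :
  enorm (A *m x) <= (\sum_i \sum_j `|A i j|) * enorm x.
Proof.
apply: (le_trans (enorm_le_sum _)); rewrite mulr_suml; apply: ler_sum => i _.
rewrite mxE mulr_suml; apply: (le_trans (ler_norm_sum _ _ _)); apply: ler_sum => j _.
by rewrite normrM ler_wpM2l ?coord_le.
Qed.


Section Frame.
Variable R : realType.
Variable W : Type.
Variable ds : W -> R.
Hypothesis ds_ge0 : forall w, 0 <= ds w.

Definition sO (e : W -> R) := forall eps, 0 < eps -> exists2 eta, 0 < eta &
  forall w, ds w < eta -> `|e w| <= eps * ds w.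
Definition bO (e : W -> R) := exists2 C, 0 <= C & exists2 eta, 0 < eta &
  forall w, ds w < eta -> `|e w| <= C * ds w.

Lemma sOD e1 e2 : sO e1 -> sO e2 -> sO (fun w => e1 w + e2 w).
Proof.
move=> H1 H2 eps e0.
have e20 : 0 < eps / 2 by rewrite divr_gt0.
have [n1 n10 Hn1] := H1 _ e20; have [n2 n20 Hn2] := H2 _ e20.
exists (Num.min n1 n2); first by rewrite lt_min n10 n20.
move=> w; rewrite lt_min => /andP[w1 w2].
apply: (le_trans (ler_normD _ _)).
have := Hn1 _ w1; have := Hn2 _ w2; lra.
Qed.

Lemma sOZ a e : sO e -> sO (fun w => a * e w).
Proof.
move=> H eps e0.
have ea0 : 0 < eps / (`|a| + 1) by rewrite divr_gt0 // ltr_pwDr.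
have [n n0 Hn] := H _ ea0; exists n => // w /Hn Hw.
rewrite normrM; apply: (le_trans (ler_wpM2l (normr_ge0 _) Hw)).
have E : eps / (`|a| + 1) * (`|a| + 1) = eps.
  by rewrite divfK // gt_eqF // ltr_pwDr.
have := ds_ge0 w; have := normr_ge0 a; have := ea0; nra.
Qed.

Lemma sO_ext e e' : (forall w, e w = e' w) -> sO e -> sO e'.
Proof. by move=> H; rewrite (_ : e' = e) //; apply/funext => w; rewrite H. Qed.

Lemma bO_ext e e' : (forall w, e w = e' w) -> bO e -> bO e'.
Proof. by move=> H; rewrite (_ : e' = e) //; apply/funext => w; rewrite H. Qed.

Lemma sO_quad e C eta : 0 < eta ->
  (forall w, ds w < eta -> `|e w| <= C * ds w ^+ 2) -> sO e.
Proof.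
move=> eta0 H eps e0.
have C1 : 0 < `|C| + 1 by rewrite ltr_pwDr.
exists (Num.min eta (eps / (`|C| + 1))).
  by rewrite lt_min eta0 divr_gt0.
move=> w; rewrite lt_min => /andP[w1 w2].
apply: (le_trans (H _ w1)).
have Hd := ds_ge0 w.
have : ds w * (`|C| + 1) < eps by rewrite -ltr_pdivlMr.
have : C <= `|C| by exact: ler_norm.
rewrite expr2 => ? ?; nra.
Qed.

Lemma sO_bO e : sO e -> bO e.
Proof. move=> /(_ 1 ltr01) [n n0 H]; exists 1 => //; exists n => //. Qed.

Lemma bOD e1 e2 : bO e1 -> bO e2 -> bO (fun w => e1 w + e2 w).
Proof.
move=> [C1 C10 [n1 n10 H1]] [C2 C20 [n2 n20 H2]].
exists (C1 + C2); first by rewrite addr_ge0.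
exists (Num.min n1 n2); first by rewrite lt_min n10 n20.
move=> w; rewrite lt_min => /andP[w1 w2].
apply: (le_trans (ler_normD _ _)).
have := H1 _ w1; have := H2 _ w2; lra.
Qed.

Lemma bOZ a e : bO e -> bO (fun w => a * e w).
Proof.
move=> [C C0 [n n0 H]]; exists (`|a| * C); first by rewrite mulr_ge0.
exists n => // w /H Hw; rewrite normrM -mulrA ler_wpM2l //.
Qed.

Lemma bO_lin e C : (forall w, `|e w| <= C * ds w) -> bO e.
Proof.
move=> H; exists `|C|; first by [].
exists 1 => // w _; apply: (le_trans (H w)); rewrite ler_wpM2r //.
exact: ler_norm.
Qed.

Lemma bO_mul e1 e2 b B eta : 0 < eta ->
  (forall w, ds w < eta -> `|b w| <= B) ->
  bO e1 -> bO e2 -> sO (fun w => e1 w * e2 w * b w).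
Proof.
move=> eta0 Hb [C1 C10 [n1 n10 H1]] [C2 C20 [n2 n20 H2]].
apply: (@sO_quad _ (C1 * C2 * B) (Num.min eta (Num.min n1 n2))).
  by rewrite !lt_min eta0 n10 n20.
move=> w; rewrite !lt_min => /and3P[w0 w1 w2].
rewrite !normrM.
have h1 := H1 _ w1; have h2 := H2 _ w2; have h3 := Hb _ w0.
have p1 := normr_ge0 (e1 w); have p2 := normr_ge0 (e2 w); have p3 := normr_ge0 (b w).
have d0 := ds_ge0 w.
have h12 : `|e1 w| * `|e2 w| <= C1 * ds w * (C2 * ds w) by rewrite ler_pM.
have h4 : 0 <= C1 * ds w * (C2 * ds w) by rewrite !mulr_ge0.
have : `|e1 w| * `|e2 w| * `|b w| <= C1 * ds w * (C2 * ds w) * B.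
  by rewrite ler_pM // mulr_ge0.
rewrite expr2; move=> ?; nra.
Qed.

End Frame.

Section EBridge.
Variable R : realType.
Local Open Scope ereal_scope.

Lemma abs_fin (a b : \bar R) (r : R) : b \is a fin_num ->
  `|a - b| <= r%:E -> a \is a fin_num /\ (`|fine a - fine b| <= r)%R.
Proof.
case: b => // b _; case: a => [a||] /=.
- by rewrite lee_fin.
- by rewrite /= leNgt ltey.
- by rewrite /= leNgt ltey.
Qed.

Lemma abs_fin3 (a b c : \bar R) (r : R) : b \is a fin_num -> c \is a fin_num ->
  `|a - b - c| <= r%:E -> a \is a fin_num /\ (`|fine a - fine b - fine c| <= r)%R.
Proof.
case: b => // b _; case: c => // c _; case: a => [a||] /=.
- by rewrite lee_fin.
- by rewrite /= leNgt ltey.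
- by rewrite /= leNgt ltey.
Qed.
End EBridge.


Section Conj.
Variable R : realType.
Variable k : nat.
Variable f : 'cV[R]_k -> \bar R.
Hypothesis Hf : eproper f.

Lemma fconj_gt y : (-oo < fconj f y)%E.
Proof.
have [_ [x0 Hx0]] := Hf.
apply: (lt_le_trans _ (ereal_sup_ubound _)); last by exists x0.
by rewrite -(fineK Hx0) -EFinB ltNyr.
Qed.

Lemma fconj_fin y : (fconj f y < +oo)%E -> fconj f y \is a fin_num.
Proof. by move=> H; rewrite fin_numElt fconj_gt H. Qed.

Lemma fconj_cvx y1 y2 t : fconj f y1 \is a fin_num -> fconj f y2 \is a fin_num ->
  0 <= t <= 1 ->
  (fconj f (t *: y1 + (1 - t) *: y2) <=
     (t * fine (fconj f y1) + (1 - t) * fine (fconj f y2))%:E)%E.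
Proof.
move=> F1 F2 /andP[t0 t1]; apply: ge_ereal_sup => _ [x _ <-].
have [Hm _] := Hf.
case Efx: (f x) => [r||]; last by have := Hm x; rewrite Efx.
- have B1 : ((dotv x y1)%:E - f x <= fconj f y1)%E by apply: ereal_sup_ubound; exists x.
  have B2 : ((dotv x y2)%:E - f x <= fconj f y2)%E by apply: ereal_sup_ubound; exists x.
  move: B1 B2; rewrite Efx -(fineK F1) -(fineK F2) -!EFinB !lee_fin => B1 B2.
  rewrite /= dotvDr !dotvZr.
  have t1' : 0 <= 1 - t by rewrite subr_ge0.
  have := ler_wpM2l t0 B1; have := ler_wpM2l t1' B2; lra.
- by rewrite /= addeNy leNye.
Qed.
End Conj.

Lemma ind_in (R : realType) k (S : set 'cV[R]_k) x : S x -> ind_fun S x = 0%E.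
Proof. by move=> Hx; rewrite /ind_fun asboolT. Qed.
Lemma ind_out (R : realType) k (S : set 'cV[R]_k) x : ~ S x -> ind_fun S x = +oo%E.
Proof. by move=> Hx; rewrite /ind_fun asboolF. Qed.


Section Main.
Variable R : realType.
Variables n p s : nat.
Variable S : set 'cV[R]_n.
Variables (A : 'M[R]_(s,n)) (K : 'M[R]_(p,n)).
Variables (g : 'cV[R]_s -> \bar R) (h : 'cV[R]_n -> R) (gradh : 'cV[R]_n -> 'cV[R]_n).
Variable f : 'cV[R]_p -> \bar R.
Variables (m delta gamma : R).
Variables (xh : 'cV[R]_n) (yh : 'cV[R]_p) (zh : 'cV[R]_s) (uh : 'cV[R]_n) (dg : 'cV[R]_s).
Hypothesis Hgprop : eproper g.
Hypothesis Hfprop : eproper f.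
Hypothesis Hcalm : calm (fconj f) yh.
Hypothesis Hdg : is_grad (fconj g) zh dg.

Definition F y := fine (fconj f y).
Definition G z := fine (fconj g z).
Definition Pr x z u := dotv z (A *m x) - G z + h x + delta / 2 * enorm (x - u) ^+ 2
  - gamma / 2 * enorm z ^+ 2.
Definition Dr x y := dotv (K *m x) y - F y.
Definition a1 := Pr xh zh uh.
Definition a2 := Dr xh yh.

Lemma Psi_fin x z u : S x -> fconj g z \is a fin_num ->
  Psi A g h S delta gamma x z u = (Pr x z u)%:E.
Proof.
move=> Sx gz; rewrite /Psi ind_in // -(fineK gz) adde0.
by rewrite /Pr /G -EFinB.
Qed.

Lemma Psi_out x z u : ~ S x -> fconj g z \is a fin_num ->
  Psi A g h S delta gamma x z u = +oo%E.
Proof.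
move=> Sx gz; rewrite /Psi ind_out // -(fineK gz).
by rewrite -!EFinB -EFinD addey // -EFinN addye.
Qed.

Lemma denom_fin x y : fconj f y \is a fin_num -> denom K f x y = (Dr x y)%:E.
Proof. by move=> fy; rewrite /denom -(fineK fy) -EFinB. Qed.

Lemma Gamma_val x y z u : fconj f y \is a fin_num -> fconj g z \is a fin_num ->
  m / 2 < Dr x y -> S x ->
  Gamma A K f g h S m delta gamma x y z u = (Pr x z u / Dr x y)%:E.
Proof.
move=> fy gz HD Sx; rewrite /Gamma asboolT; last first.
  split; [by rewrite ltey_eq fy | by rewrite denom_fin // lte_fin |
          by rewrite ltey_eq gz].
by rewrite Psi_fin // denom_fin //= -EFinM.
Qed.

Hypothesis Hm : 0 < m.

Lemma Gamma_out x y z u : ~ S x ->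
  Gamma A K f g h S m delta gamma x y z u = +oo%E.
Proof.
move=> Sx; rewrite /Gamma; case: asboolP => // -[fy HD gz].
rewrite Psi_out //; last exact: fconj_fin.
have fy' := fconj_fin Hfprop fy.
move: HD; rewrite denom_fin // lte_fin /= => HD.
by rewrite gt0_mulye // lte_fin invr_gt0; apply: lt_trans HD; rewrite divr_gt0.
Qed.

Definition W := ('cV[R]_n * 'cV[R]_p * 'cV[R]_s * 'cV[R]_n)%type.
Definition ds (w : W) := Num.sqrt (enorm (w.1.1.1 - xh) ^+ 2 + enorm (w.1.1.2 - yh) ^+ 2
  + enorm (w.1.2 - zh) ^+ 2 + enorm (w.2 - uh) ^+ 2).

Lemma ds_ge0 w : 0 <= ds w.
Proof. exact: sqrtr_ge0. Qed.

Lemma ds_bounds w : [/\ enorm (w.1.1.1 - xh) <= ds w, enorm (w.1.1.2 - yh) <= ds w,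
  enorm (w.1.2 - zh) <= ds w & enorm (w.2 - uh) <= ds w].
Proof.
have P1 := sqr_ge0 (enorm (w.1.1.1 - xh)); have P2 := sqr_ge0 (enorm (w.1.1.2 - yh)).
have P3 := sqr_ge0 (enorm (w.1.2 - zh)); have P4 := sqr_ge0 (enorm (w.2 - uh)).
have H a : 0 <= a -> a ^+ 2 <= enorm (w.1.1.1 - xh) ^+ 2 + enorm (w.1.1.2 - yh) ^+ 2
  + enorm (w.1.2 - zh) ^+ 2 + enorm (w.2 - uh) ^+ 2 -> a <= ds w.
  move=> a0 Ha; rewrite -(ger0_norm a0) -sqrtr_sqr /ds ler_sqrt //.
  by rewrite !addr_ge0.
split; apply: H; rewrite ?enorm_ge0 //; lra.
Qed.

Lemma ds_le_sum w : ds w <= enorm (w.1.1.1 - xh) + enorm (w.1.1.2 - yh)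
  + enorm (w.1.2 - zh) + enorm (w.2 - uh).
Proof.
apply: sqrt_le_lem; first by rewrite !addr_ge0 ?enorm_ge0.
have := enorm_ge0 (w.1.1.1 - xh); have := enorm_ge0 (w.1.1.2 - yh).
have := enorm_ge0 (w.1.2 - zh); have := enorm_ge0 (w.2 - uh).
rewrite !expr2; nra.
Qed.

Lemma lin_b k (v a : 'cV[R]_k) d : enorm a <= d -> `|dotv v a| <= (k%:R * enorm v) * d.
Proof.
move=> ad; apply: (le_trans (dotv_bound _ _)).
by rewrite -mulrA ler_wpM2l // ler_wpM2l // enorm_ge0.
Qed.

Lemma quad_b2 k (a b : 'cV[R]_k) d : enorm a <= d -> enorm b <= d ->
  `|dotv a b| <= k%:R * d ^+ 2.
Proof.
move=> ad bd; apply: (le_trans (dotv_bound _ _)).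
by rewrite ler_wpM2l // expr2 ler_pM // enorm_ge0.
Qed.

Lemma quad_b k l (M : 'M[R]_(k, l)) (a : 'cV[R]_k) (b : 'cV[R]_l) d :
  enorm a <= d -> enorm b <= d ->
  `|dotv a (M *m b)| <= (k%:R * \sum_i \sum_j `|M i j|) * d ^+ 2.
Proof.
move=> ad bd; apply: (le_trans (dotv_bound _ _)).
have C0 : 0 <= \sum_i \sum_j `|M i j| by do 2 apply: sumr_ge0 => ? _.
rewrite -mulrA ler_wpM2l // expr2.
apply: (le_trans (ler_wpM2l (enorm_ge0 _) (mul_bound M b))).
have ab : enorm a * enorm b <= d * d by rewrite ler_pM ?enorm_ge0.
rewrite mulrCA; exact: ler_wpM2l.
Qed.

Lemma grad_near k (phi : 'cV[R]_k -> \bar R) x v : is_grad phi x v ->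
  forall eps, 0 < eps -> exists2 eta, 0 < eta & forall y, enorm (y - x) < eta ->
  phi y \is a fin_num /\ `|fine (phi y) - fine (phi x) - dotv v (y - x)| <= eps * enorm (y - x).
Proof.
move=> [px H] eps e0; have [eta eta0 He] := H _ e0; exists eta => // y /He Hy.
by have := abs_fin3 (c := (dotv v (y - x))%:E) px erefl Hy.
Qed.

Hypothesis Hgh : is_grad (fun w => (h w)%:E) xh (gradh xh).

Lemma calm_near : exists2 ec, 0 < ec & exists2 kap, 0 < kap & forall y,
  enorm (y - yh) < ec -> fconj f y \is a fin_num /\ `|F y - F yh| <= kap * enorm (y - yh).
Proof.
have [fy [ec [kap [ec0 kap0 H]]]] := Hcalm.
exists ec => //; exists kap => // y /H Hy; exact: abs_fin fy Hy.
Qed.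

Definition eG (w : W) := G w.1.2 - G zh - dotv dg (w.1.2 - zh).
Definition eH (w : W) := h w.1.1.1 - h xh - dotv (gradh xh) (w.1.1.1 - xh).

Lemma sO_eG : sO ds eG.
Proof.
move=> eps e0; have [eta eta0 H] := grad_near Hdg e0; exists eta => // w wd.
have [_ _ dz _] := ds_bounds w.
have [_ Hw] := H w.1.2 (le_lt_trans dz wd).
apply: (le_trans Hw); rewrite ler_wpM2l // ltW //.
Qed.

Lemma sO_eH : sO ds eH.
Proof.
move=> eps e0; have [eta eta0 H] := grad_near Hgh e0; exists eta => // w wd.
have [dx _ _ _] := ds_bounds w.
have [_ Hw] := H w.1.1.1 (le_lt_trans dx wd).
apply: (le_trans Hw); rewrite ler_wpM2l // ltW //.
Qed.

Lemma sOB (e1 e2 : W -> R) : sO ds e1 -> sO ds e2 -> sO ds (fun w => e1 w - e2 w).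
Proof.
move=> H1 H2; apply: (sO_ext (e := fun w => e1 w + (-1) * e2 w)).
  by move=> w; rewrite mulN1r.
apply: sOD; first by []. by apply: (sOZ ds_ge0).
Qed.

Lemma sO_q2 k (a b : W -> 'cV[R]_k) : (forall w, enorm (a w) <= ds w) ->
  (forall w, enorm (b w) <= ds w) -> sO ds (fun w => dotv (a w) (b w)).
Proof.
move=> Ha Hb; apply: (@sO_quad _ _ _ ds_ge0 _ k%:R 1) => // w _.
exact: quad_b2.
Qed.

Lemma sO_qM k l (M : 'M[R]_(k, l)) (a : W -> 'cV[R]_k) (b : W -> 'cV[R]_l) :
  (forall w, enorm (a w) <= ds w) ->
  (forall w, enorm (b w) <= ds w) -> sO ds (fun w => dotv (a w) (M *m b w)).
Proof.
move=> Ha Hb; apply: (@sO_quad _ _ _ ds_ge0 _ _ 1) => // w _.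
exact: quad_b.
Qed.

Definition ep (w : W) := dotv (w.1.2 - zh) (A *m (w.1.1.1 - xh)) - eG w + eH w
  + delta / 2 * dotv ((w.1.1.1 - xh) - (w.2 - uh)) ((w.1.1.1 - xh) - (w.2 - uh))
  - gamma / 2 * dotv (w.1.2 - zh) (w.1.2 - zh).

Lemma sO_ep : sO ds ep.
Proof.
have bx w : enorm (w.1.1.1 - xh) <= ds w by case: (ds_bounds w).
have bz w : enorm (w.1.2 - zh) <= ds w by case: (ds_bounds w).
have bu w : enorm (w.2 - uh) <= ds w by case: (ds_bounds w).
apply: sOB; last by apply: (sOZ ds_ge0); exact: sO_q2.
apply: sOD; last first.
  apply: (sOZ ds_ge0); apply: (sO_ext (e := fun w =>
    dotv (w.1.1.1 - xh) (w.1.1.1 - xh) - dotv (w.1.1.1 - xh) (w.2 - uh)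
    - (dotv (w.2 - uh) (w.1.1.1 - xh) - dotv (w.2 - uh) (w.2 - uh)))).
    by move=> w; rewrite dotvBl !dotvBr.
  by apply: sOB; apply: sOB; exact: sO_q2.
apply: sOD; last exact: sO_eH.
apply: sOB; last exact: sO_eG.
exact: sO_qM.
Qed.

Definition LP (w : W) := dotv (A^T *m zh) (w.1.1.1 - xh) + dotv (gradh xh) (w.1.1.1 - xh)
  + delta * dotv (xh - uh) (w.1.1.1 - xh)
  + dotv (A *m xh) (w.1.2 - zh) - dotv dg (w.1.2 - zh) - gamma * dotv zh (w.1.2 - zh)
  + delta * dotv (uh - xh) (w.2 - uh).
Definition LD (w : W) := dotv (K^T *m yh) (w.1.1.1 - xh) + dotv (K *m xh) (w.1.1.2 - yh).

Lemma P_expand w : Pr w.1.1.1 w.1.2 w.2 = a1 + LP w + ep w.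
Proof.
case: w => [[[x y] z] u] /=.
rewrite /a1 /Pr /LP /ep /eG /eH /= !enorm_sq -!dotv_trmx.
rewrite !(mulmxBr, dotvBl, dotvBr, dotvDl, dotvDr, dotvZl, dotvZr).
rewrite !(dotvC xh x, dotvC u x, dotvC uh x, dotvC u xh, dotvC uh xh, dotvC uh u).
rewrite !(dotvC zh z, dotvC (A *m xh) z, dotvC (A *m xh) zh).
by field.
Qed.

Lemma D_expand w : Dr w.1.1.1 w.1.1.2 = a2 + LD w - (F w.1.1.2 - F yh)
  + dotv (K *m (w.1.1.1 - xh)) (w.1.1.2 - yh).
Proof.
case: w => [[[x y] z] u] /=.
rewrite /a2 /Dr /LD /= -!dotv_trmx.
rewrite !(mulmxBr, dotvBl, dotvBr).
rewrite !(dotvC yh (K *m x), dotvC yh (K *m xh)).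
ring.
Qed.

Hypothesis Hxh : S xh.
Hypothesis Hden : ((m / 2)%:E < denom K f xh yh)%E.
Hypothesis Halpha1 : (0 < Psi A g h S delta gamma xh zh uh)%E.

Lemma fyh : fconj f yh \is a fin_num. Proof. by case: Hcalm. Qed.
Lemma gzh : fconj g zh \is a fin_num. Proof. by case: Hdg. Qed.
Lemma a2_gt : m / 2 < a2.
Proof. by move: Hden; rewrite denom_fin ?fyh // lte_fin. Qed.
Lemma a2_gt0 : 0 < a2.
Proof. by apply: lt_trans a2_gt; rewrite divr_gt0. Qed.
Lemma a1_gt0 : 0 < a1.
Proof. by move: Halpha1; rewrite Psi_fin ?gzh // lte_fin. Qed.

Definition gxn nu := (a2 ^+ 2)^-1 *: (a2 *: (A^T *m zh + gradh xh + nu + delta *: (xh - uh))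
  - a1 *: (K^T *m yh)).
Definition gyn eta := (a2 ^+ 2)^-1 *: (a1 *: (eta - K *m xh)).
Definition gz := a2^-1 *: (A *m xh - dg - gamma *: zh).
Definition gu := a2^-1 *: (delta *: (uh - xh)).
Definition Lin (w : W) := dotv (gxn 0) (w.1.1.1 - xh) + dotv (gyn 0) (w.1.1.2 - yh)
  + dotv gz (w.1.2 - zh) + dotv gu (w.2 - uh).

Lemma Lin_eq w : Lin w = LP w / a2 - a1 * LD w / a2 ^+ 2.
Proof.
have a20 : a2 != 0 by rewrite gt_eqF // a2_gt0.
rewrite /Lin /LP /LD /gxn /gyn /gz /gu.
rewrite !(dotvZl, dotvDl, dotvBl, dotv0l, sub0r, dotvNl).
by field.
Qed.

Lemma gxn_eq nu v : dotv (gxn nu) v = dotv (gxn 0) v + a2^-1 * dotv nu v.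
Proof.
have a20 : a2 != 0 by rewrite gt_eqF // a2_gt0.
rewrite /gxn !(dotvZl, dotvDl, dotvBl, dotv0l).
by field.
Qed.

Lemma gyn_eq eta v : dotv (gyn eta) v = dotv (gyn 0) v + a1 / a2 ^+ 2 * dotv eta v.
Proof.
have a20 : a2 != 0 by rewrite gt_eqF // a2_gt0.
rewrite /gyn !(dotvZl, dotvDl, dotvBl, dotv0l).
by field.
Qed.

Lemma bO_lv k (v : 'cV[R]_k) (a : W -> 'cV[R]_k) : (forall w, enorm (a w) <= ds w) ->
  bO ds (fun w => dotv v (a w)).
Proof. by move=> H; apply: (bO_lin ds_ge0 (C := k%:R * enorm v)) => w; exact: lin_b. Qed.

Lemma bO_N (e : W -> R) : bO ds e -> bO ds (fun w => - e w).
Proof.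
by move=> H; apply: (bO_ext (e := fun w => (-1) * e w)) => [w|]; [rewrite mulN1r | apply: bOZ].
Qed.

Lemma bO_P : bO ds (fun w => Pr w.1.1.1 w.1.2 w.2 - a1).
Proof.
have bx w : enorm (w.1.1.1 - xh) <= ds w by case: (ds_bounds w).
have bz w : enorm (w.1.2 - zh) <= ds w by case: (ds_bounds w).
have bu w : enorm (w.2 - uh) <= ds w by case: (ds_bounds w).
apply: (bO_ext (e := fun w => LP w + ep w)).
  by move=> w; rewrite P_expand; ring.
apply: bOD; last exact: sO_bO sO_ep.
rewrite /LP; repeat apply: bOD; (try apply: bO_N); (try apply: bOZ);
  apply: bO_lv => w; by case: (ds_bounds w).
Qed.

Lemma bO_F : bO ds (fun w => F w.1.1.2 - F yh).
Proof.
have [ec ec0 [kap kap0 H]] := calm_near.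
exists kap; first exact: ltW.
exists ec => // w wd.
have [_ dy _ _] := ds_bounds w.
have [_ Hw] := H w.1.1.2 (le_lt_trans dy wd).
apply: (le_trans Hw); rewrite ler_wpM2l // ltW //.
Qed.

Lemma sO_ed : sO ds (fun w => dotv (K *m (w.1.1.1 - xh)) (w.1.1.2 - yh)).
Proof.
apply: (sO_ext (e := fun w => dotv (w.1.1.2 - yh) (K *m (w.1.1.1 - xh)))).
  by move=> w; rewrite dotvC.
by apply: sO_qM => w; case: (ds_bounds w).
Qed.

Lemma bO_D : bO ds (fun w => Dr w.1.1.1 w.1.1.2 - a2).
Proof.
apply: (bO_ext (e := fun w => LD w + - (F w.1.1.2 - F yh)
   + dotv (K *m (w.1.1.1 - xh)) (w.1.1.2 - yh))).
  by move=> w; rewrite D_expand; ring.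
apply: bOD; last exact: sO_bO sO_ed.
apply: bOD; last exact: bO_N bO_F.
by apply: bOD; apply: bO_lv => w; case: (ds_bounds w).
Qed.

Lemma near0 : exists2 e0, 0 < e0 & forall w, ds w < e0 ->
  [/\ fconj f w.1.1.2 \is a fin_num, fconj g w.1.2 \is a fin_num &
      m / 2 < Dr w.1.1.1 w.1.1.2].
Proof.
have [ec ec0 [kap kap0 Hc]] := calm_near.
have [eg eg0 Hg] := grad_near Hdg ltr01.
have [C C0 [eD eD0 HD]] := bO_D.
have q0 : 0 < (a2 - m / 2) / (C + 1) by rewrite divr_gt0 ?subr_gt0 ?a2_gt // ltr_pwDr.
exists (Num.min (Num.min ec eg) (Num.min eD ((a2 - m / 2) / (C + 1)))).
  by rewrite !lt_min ec0 eg0 eD0 q0.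
move=> w; rewrite !lt_min => /andP[/andP[w1 w2] /andP[w3 w4]].
have [_ dy dz _] := ds_bounds w.
split.
- by case: (Hc _ (le_lt_trans dy w1)).
- by case: (Hg _ (le_lt_trans dz w2)).
- have := HD _ w3; rewrite ler_norml => /andP[H1 H2].
  have := ds_ge0 w.
  have : ds w * (C + 1) < a2 - m / 2 by rewrite -ltr_pdivlMr // ltr_pwDr.
  nra.
Qed.

Lemma key eps : 0 < eps -> exists2 eta, 0 < eta & forall w, ds w < eta ->
  [/\ fconj f w.1.1.2 \is a fin_num, fconj g w.1.2 \is a fin_num,
      m / 2 < Dr w.1.1.1 w.1.1.2 &
      `|Pr w.1.1.1 w.1.2 w.2 / Dr w.1.1.1 w.1.1.2 - a1 / a2 - Lin w
        - a1 / a2 ^+ 2 * (F w.1.1.2 - F yh)| <= eps * ds w].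
Proof.
move=> e0.
have [r0 r00 N] := near0.
have m20 : 0 < m / 2 by rewrite divr_gt0.
have a20 := a2_gt0.
have sT : sO ds (fun w => a2^-1 * ep w
    + (- (a1 / a2 ^+ 2)) * dotv (K *m (w.1.1.1 - xh)) (w.1.1.2 - yh)
    + (a2 - Dr w.1.1.1 w.1.1.2)
      * ((Pr w.1.1.1 w.1.2 w.2 - a1) * a2 - a1 * (Dr w.1.1.1 w.1.1.2 - a2))
      * (Dr w.1.1.1 w.1.1.2 * a2 ^+ 2)^-1).
  apply: sOD; first by apply: sOD; apply: (sOZ ds_ge0); [exact: sO_ep | exact: sO_ed].
  apply: (bO_mul ds_ge0 (B := (m / 2 * a2 ^+ 2)^-1) r00).
  - move=> w /N [_ _ HD].
    have D0 : 0 < Dr w.1.1.1 w.1.1.2 by apply: lt_trans HD.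
    rewrite ger0_norm; last by rewrite invr_ge0 mulr_ge0 // ?sqr_ge0 // ltW.
    rewrite lef_pV2 ?posrE ?mulr_gt0 ?exprn_gt0 //.
    by rewrite ler_wpM2r ?sqr_ge0 // ltW.
  - apply: (bO_ext (e := fun w => - (Dr w.1.1.1 w.1.1.2 - a2))).
      by move=> w; rewrite opprB.
    exact: bO_N bO_D.
  - apply: (bO_ext (e := fun w => a2 * (Pr w.1.1.1 w.1.2 w.2 - a1)
        + (- a1) * (Dr w.1.1.1 w.1.1.2 - a2))).
      by move=> w; ring.
    by apply: bOD; apply: bOZ; [exact: bO_P | exact: bO_D].
have [r1 r10 H] := sT eps e0.
exists (Num.min r0 r1); first by rewrite lt_min r00 r10.
move=> w; rewrite lt_min => /andP[w0 w1].
have [fy gz HD] := N w w0; split => //.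
apply: le_trans (H w w1); rewrite le_eqVlt; apply/orP; left; apply/eqP; congr (`|_|).
have D0 : Dr w.1.1.1 w.1.1.2 != 0 by rewrite gt_eqF //; apply: lt_trans HD.
have a20' : a2 != 0 by rewrite gt_eqF.
rewrite Lin_eq.
have -> : ep w = Pr w.1.1.1 w.1.2 w.2 - a1 - LP w by rewrite P_expand; ring.
have -> : dotv (K *m (w.1.1.1 - xh)) (w.1.1.2 - yh) =
  Dr w.1.1.1 w.1.1.2 - a2 - LD w + (F w.1.1.2 - F yh) by rewrite D_expand; ring.
move: D0; generalize (Pr w.1.1.1 w.1.2 w.2) (Dr w.1.1.1 w.1.1.2) (LP w) (LD w)
  (F w.1.1.2 - F yh) => P D X Y Z D0.
by field; rewrite D0 a20'.
Qed.

Definition Gam := Gamma A K f g h S m delta gamma.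

Lemma Gam_hat : Gam xh yh zh uh = (a1 / a2)%:E.
Proof. by rewrite /Gam Gamma_val ?fyh ?gzh ?a2_gt. Qed.

Lemma rev_dir nu eta : subdiff (ind_fun S) xh nu -> subdiff (fconj f) yh eta ->
  frechet4 Gam xh yh zh uh (gxn nu, gyn eta, gz, gu).
Proof.
move=> [_ Hnu] [_ Heta]; split; first by rewrite Gam_hat.
move=> eps e0; have [r r0 H] := key e0; exists r => // x y z u /=.
move=> dsw; have [fy gz' HD E] := H (x, y, z, u) dsw.
have [Sx|NSx] := pselect (S x); last first.
  by rewrite Gam_hat /Gam Gamma_out // -EFinN !addye // leey.
rewrite Gam_hat /Gam Gamma_val // -!EFinB lee_fin.
move: E; rewrite /= /Lin /= => E.
rewrite gxn_eq gyn_eq.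
have Hx : dotv nu (x - xh) <= 0.
  by have := Hnu x; rewrite ind_in // ind_in // add0e lee_fin.
have Hy : F yh + dotv eta (y - yh) <= F y.
  by have := Heta y; rewrite -(fineK fy) -(fineK fyh) -EFinD lee_fin.
have c0 : 0 < a1 / a2 ^+ 2 by rewrite divr_gt0 ?a1_gt0 ?exprn_gt0 ?a2_gt0.
have i0 : 0 < a2^-1 by rewrite invr_gt0 a2_gt0.
have Hy' : 0 <= F y - (F yh + dotv eta (y - yh)) by rewrite subr_ge0.
have := ler_wpM2l (ltW c0) Hy'.
have := ler_wpM2l (ltW i0) Hx.
move: E; rewrite ler_norml /ds /= => /andP[E1 E2].
lra.
Qed.

Definition Mx (xi : 'cV[R]_n * 'cV[R]_p * 'cV[R]_s * 'cV[R]_n) (w : W) :=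
  dotv (xi.1.1.1 - gxn 0) (w.1.1.1 - xh) + dotv (xi.1.1.2 - gyn 0) (w.1.1.2 - yh)
  + dotv (xi.1.2 - gz) (w.1.2 - zh) + dotv (xi.2 - gu) (w.2 - uh).

Lemma fwd_core xi : frechet4 Gam xh yh zh uh xi -> forall eps, 0 < eps ->
  exists2 r, 0 < r & forall w, ds w < r -> S w.1.1.1 ->
  fconj f w.1.1.2 \is a fin_num /\
  Mx xi w <= a1 / a2 ^+ 2 * (F w.1.1.2 - F yh) + eps * ds w.
Proof.
move=> [_ Hfr] eps e0.
have e20 : 0 < eps / 2 by rewrite divr_gt0.
have [r1 r10 H1] := Hfr _ e20; have [r2 r20 H2] := key e20.
exists (Num.min r1 r2); first by rewrite lt_min r10 r20.
case=> [[[x y] z] u]; rewrite lt_min => /andP[w1 w2] /= Sx.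
have [fy gz' HD E] := H2 _ w2; split => //.
have := H1 x y z u w1; rewrite Gam_hat /Gam Gamma_val // -!EFinB lee_fin.
move: E; rewrite /Mx /Lin /ds /= !dotvBl ler_norml => /andP[E1 E2] E3.
lra.
Qed.

Lemma dir_lemma (L B : R) : (forall eps, 0 < eps -> exists2 r, 0 < r &
  forall t, 0 < t -> t < r -> t <= 1 -> t * L <= t * B + eps * t) -> L <= B.
Proof.
move=> H; rewrite leNgt; apply/negP => BL.
have e0 : 0 < (L - B) / 2 by rewrite divr_gt0 // subr_gt0.
have [r r0 Hr] := H _ e0.
have t0 : 0 < Num.min (r / 2) 1 by rewrite lt_min divr_gt0 // ltr01.
have t1 : Num.min (r / 2) 1 < r.
  by rewrite gt_min; apply/orP; left; rewrite ltr_pdivrMr // ltr_pMr // ltr1n.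
have t2 : Num.min (r / 2) 1 <= 1 by rewrite ge_min lexx orbT.
have := Hr _ t0 t1 t2; move: t0; set t := Num.min _ _ => t0 Ht.
have : t * (L - B - (L - B) / 2) <= 0 by lra.
rewrite pmulr_rle0 //; lra.
Qed.

Lemma ds_dir (a : 'cV[R]_n) (b : 'cV[R]_p) (c : 'cV[R]_s) (d : 'cV[R]_n) t : 0 <= t ->
  ds (xh + t *: a, yh + t *: b, zh + t *: c, uh + t *: d) = t * ds (xh + a, yh + b, zh + c, uh + d).
Proof.
move=> t0; rewrite /ds /= !(addrC xh) !(addrC yh) !(addrC zh) !(addrC uh) !addrK !enormZ.
rewrite (ger0_norm t0) !exprMn -!mulrDr sqrtrM ?sqr_ge0 // sqrtr_sqr ger0_norm //.
Qed.

Lemma dir_gen xi (a : 'cV[R]_n) (b : 'cV[R]_p) (c : 'cV[R]_s) (d : 'cV[R]_n) B :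
  frechet4 Gam xh yh zh uh xi ->
  (forall t, 0 < t -> t <= 1 -> S (xh + t *: a)) ->
  (forall t, 0 < t -> t <= 1 -> fconj f (yh + t *: b) \is a fin_num ->
     a1 / a2 ^+ 2 * (F (yh + t *: b) - F yh) <= t * B) ->
  dotv (xi.1.1.1 - gxn 0) a + dotv (xi.1.1.2 - gyn 0) b + dotv (xi.1.2 - gz) c
    + dotv (xi.2 - gu) d <= B.
Proof.
move=> Hxi HS HQ; apply: dir_lemma => eps e0.
set N := ds (xh + a, yh + b, zh + c, uh + d).
have N0 : 0 <= N by exact: ds_ge0.
have N1 : 0 < N + 1 by rewrite ltr_pwDr.
have [r r0 Hr] := fwd_core Hxi (divr_gt0 e0 N1).
exists (r / (N + 1)); first by rewrite divr_gt0.
move=> t t0 tr t1.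
have dst : ds (xh + t *: a, yh + t *: b, zh + t *: c, uh + t *: d) < r.
  rewrite (ds_dir _ _ _ _ (ltW t0)) -/N.
  move: tr; rewrite ltr_pdivlMr // => tr; nra.
have [fy HM] := Hr _ dst (HS _ t0 t1).
have := HQ _ t0 t1 fy.
move: HM; rewrite (ds_dir _ _ _ _ (ltW t0)) -/N /Mx /= !(addrC xh) !(addrC yh) !(addrC zh) !(addrC uh) !addrK.
rewrite !dotvZr => HM HQt.
have : eps / (N + 1) * (t * N) <= eps * t.
  have -> : eps / (N + 1) * (t * N) = eps * t * (N / (N + 1)) by field; rewrite gt_eqF.
  rewrite ler_piMr ?mulr_ge0 ?ltW // ltr_pdivrMr // mul1r; lra.
lra.
Qed.

Hypothesis HSconv : cvx_set S.

Lemma gxn_vec nu : gxn nu = gxn 0 + a2^-1 *: nu.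
Proof.
have a20 : a2 != 0 by rewrite gt_eqF // a2_gt0.
by apply/matrixP => i j; rewrite /gxn !mxE; field.
Qed.

Lemma gyn_vec eta : gyn eta = gyn 0 + (a1 / a2 ^+ 2) *: eta.
Proof.
have a20 : a2 != 0 by rewrite gt_eqF // a2_gt0.
by apply/matrixP => i j; rewrite /gyn !mxE; field.
Qed.

Lemma cvx_vec k (x y : 'cV[R]_k) t : x + t *: (y - x) = t *: y + (1 - t) *: x.
Proof. by apply/matrixP => i j; rewrite !mxE; ring. Qed.

Lemma dself0 k (v : 'cV[R]_k) : dotv v v <= 0 -> v = 0.
Proof.
rewrite -enorm_sq => H; have e0 : enorm v ^+ 2 = 0.
  by apply/eqP; rewrite eq_le H sqr_ge0.
by move/eqP: e0; rewrite sqrf_eq0 => /eqP /enorm_eq0.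
Qed.

Lemma fwd xi : frechet4 Gam xh yh zh uh xi ->
  [/\ exists2 nu, subdiff (ind_fun S) xh nu & xi.1.1.1 = gxn nu,
      exists2 eta, subdiff (fconj f) yh eta & xi.1.1.2 = gyn eta,
      xi.1.2 = gz & xi.2 = gu].
Proof.
move=> Hxi.
have HS0 t : 0 < t -> t <= 1 -> S (xh + t *: 0) by rewrite scaler0 addr0.
have HQ0 t : 0 < t -> t <= 1 -> fconj f (yh + t *: 0) \is a fin_num ->
    a1 / a2 ^+ 2 * (F (yh + t *: 0) - F yh) <= t * 0.
  by rewrite scaler0 addr0 subrr !mulr0.
have c0 : 0 < a1 / a2 ^+ 2 by rewrite divr_gt0 ?a1_gt0 ?exprn_gt0 ?a2_gt0.
have a20 : a2 != 0 by rewrite gt_eqF // a2_gt0.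
split.
- exists (a2 *: (xi.1.1.1 - gxn 0)); last first.
    by rewrite gxn_vec scalerA mulVf // scale1r addrC subrK.
  split; first by rewrite ind_in.
  move=> y; have [Sy|NSy] := pselect (S y); last by rewrite (ind_out NSy) leey.
  rewrite !ind_in // add0e lee_fin dotvZl.
  suff : dotv (xi.1.1.1 - gxn 0) (y - xh) <= 0 by move=> H; rewrite pmulr_rle0 ?a2_gt0.
  have := @dir_gen _ (y - xh) 0 0 0 0 Hxi _ HQ0.
  rewrite !dotv0r !addr0; apply => t t0 t1.
  rewrite cvx_vec; apply: HSconv => //; rewrite ltW //.
- exists ((a1 / a2 ^+ 2)^-1 *: (xi.1.1.2 - gyn 0)); last first.
    by rewrite gyn_vec scalerA mulfV ?gt_eqF // scale1r addrC subrK.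
  split; first exact: fyh.
  move=> y; have [fy|fy] := boolP (fconj f y \is a fin_num); last first.
    have : (fconj f y < +oo)%E = false.
      by apply/negbTE; apply: contra fy; exact: fconj_fin.
    by rewrite ltey => /negbFE/eqP ->; rewrite leey.
  rewrite -(fineK fy) -(fineK fyh) -EFinD lee_fin dotvZl -/(F y) -/(F yh).
  suff : dotv (xi.1.1.2 - gyn 0) (y - yh) <= a1 / a2 ^+ 2 * (F y - F yh).
    move=> H; have ci : 0 < (a1 / a2 ^+ 2)^-1 by rewrite invr_gt0.
    have := ler_wpM2l (ltW ci) H; rewrite mulrA mulVf ?gt_eqF // mul1r; lra.
  have := @dir_gen _ 0 (y - yh) 0 0 (a1 / a2 ^+ 2 * (F y - F yh)) Hxi HS0.
  rewrite !dotv0r add0r !addr0; apply => t t0 t1 fyt.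
  have := fconj_cvx Hfprop fy fyh (t := t); rewrite -cvx_vec ltW //= => /(_ t1).
  rewrite -(fineK fyt) lee_fin -/(F (yh + t *: (y - yh))) => H.
  have : F (yh + t *: (y - yh)) - F yh <= t * (F y - F yh).
    by move: H; rewrite /F; lra.
  move=> H2; have := ler_wpM2l (ltW c0) H2.
  move: c0; set c := a1 / a2 ^+ 2 => c0; by rewrite mulrCA.
- have := @dir_gen _ 0 0 (xi.1.2 - gz) 0 0 Hxi HS0 HQ0.
  rewrite !dotv0r !add0r ?addr0 => H; exact: subr0_eq (dself0 H).
- have := @dir_gen _ 0 0 0 (xi.2 - gu) 0 Hxi HS0 HQ0.
  rewrite !dotv0r !add0r ?addr0 => H; exact: subr0_eq (dself0 H).
Qed.

Hypothesis Hzh : (edom (fconj g))° zh.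

Lemma sum_le k (u : 'cV[R]_k) r : (forall i, `|u i 0| < r) -> \sum_i `|u i 0| <= k%:R * r.
Proof.
move=> H; apply: (le_trans (ler_sum _ (fun i _ => ltW (H i)))).
by rewrite sumr_const card_ord mulr_natl.
Qed.

Lemma opens : exists2 r, 0 < r & forall x y, ball xh r x -> ball yh r y ->
  fconj f y \is a fin_num /\ m / 2 < Dr x y.
Proof.
have [e0 e00 N] := near0.
have np0 : 0 < (n + p).+1%:R :> R by rewrite ltr0n.
exists (e0 / (n + p).+1%:R); first by rewrite divr_gt0.
move=> x y /ballP [r0 Hx] /ballP [_ Hy].
suff : ds (x, y, zh, uh) < e0 by move=> /N [].
apply: (le_lt_trans (ds_le_sum _)); rewrite /= !subrr !enorm0 !addr0.
have Sx : enorm (x - xh) <= n%:R * (e0 / (n + p).+1%:R).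
  apply: (le_trans (enorm_le_sum _)); apply: sum_le => i.
  by rewrite !mxE distrC.
have Sy : enorm (y - yh) <= p%:R * (e0 / (n + p).+1%:R).
  apply: (le_trans (enorm_le_sum _)); apply: sum_le => i.
  by rewrite !mxE distrC.
apply: (le_lt_trans (lerD Sx Sy)).
rewrite -mulrDl -natrD.
rewrite mulrA ltr_pdivrMr // mulrC ltr_pM2l //.
by rewrite ltr_nat.
Qed.

Lemma main_sec :
  let alpha1 := fine (Psi A g h S delta gamma xh zh uh) in
  let alpha2 := fine (denom K f xh yh) in
  exists (O1 : set 'cV[R]_n) (O2 : set 'cV[R]_p) (O3 : set 'cV[R]_s),
    [/\ open O1 /\ O1 xh,
        [/\ open O2, O2 `<=` edom (fconj f) & O2 yh],
        [/\ open O3, O3 `<=` edom (fconj g) & O3 zh],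
        (forall x y, O1 x -> O2 y -> ((m / 2)%:E < denom K f x y)%E) &
        frechet4 (Gamma A K f g h S m delta gamma) xh yh zh uh =
        [set xi | [/\
           exists2 nu, subdiff (ind_fun S) xh nu &
             xi.1.1.1 = (alpha2 ^+ 2)^-1 *:
               (alpha2 *: (A^T *m zh + gradh xh + nu + delta *: (xh - uh))
                - alpha1 *: (K^T *m yh)),
           exists2 eta, subdiff (fconj f) yh eta &
             xi.1.1.2 = (alpha2 ^+ 2)^-1 *: (alpha1 *: (eta - K *m xh)),
           xi.1.2 = alpha2^-1 *: (A *m xh - dg - gamma *: zh) &
           xi.2 = alpha2^-1 *: (delta *: (uh - xh))]]].
Proof.
move=> alpha1 alpha2.
have E1 : alpha1 = a1 by rewrite /alpha1 Psi_fin ?gzh.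
have E2 : alpha2 = a2 by rewrite /alpha2 denom_fin ?fyh.
rewrite E1 E2.
have [r r0 Hr] := opens.
exists (ball xh r), (ball yh r), ((edom (fconj g))°); split.
- by split; [exact: ball_open | exact: ballxx].
- split; [exact: ball_open | | exact: ballxx].
  move=> y /(Hr xh y (ballxx _ r0)) [fy _].
  by rewrite /edom /= ltey_eq fy.
- by split; [exact: open_interior | exact: interior_subset | exact: Hzh].
- by move=> x y Hx Hy; have [fy HD] := Hr x y Hx Hy; rewrite denom_fin // lte_fin.
- apply/seteqP; split => xi.
  + move/fwd => [[nu Hnu E3] [eta Heta E4] E5 E6]; split => //.
    * by exists nu.
    * by exists eta.
  + case: xi => [[[a b] c] d] [[nu Hnu /= E3] [eta Heta /= E4] /= E5 E6].
    rewrite E3 E4 E5 E6; exact: rev_dir.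
Qed.

End Main.


Unset Implicit Arguments.
Set Strict Implicit.

Theorem lemma6p1 (R : realType) (n p s : nat)
  (S : set 'cV[R]_n) (A : 'M[R]_(s, n)) (K : 'M[R]_(p, n))
  (g : 'cV[R]_s -> \bar R) (h : 'cV[R]_n -> R) (gradh : 'cV[R]_n -> 'cV[R]_n)
  (f : 'cV[R]_p -> \bar R)
  (* standing assumptions *)
  (HSne : exists x, S x) (HSconv : cvx_set S) (HScpt : compact S)
  (Hgprop : eproper g) (Hgconv : convex_efun g) (Hglsc : elsc g)
  (Hh : exists U : set 'cV[R]_n, [/\ open U, S `<=` U,
          (forall x, U x -> is_grad (fun w => (h w)%:E) x (gradh x)) &
          exists L : R, forall x y, U x -> U y ->
            enorm (gradh x - gradh y) <= L * enorm (x - y)])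
  (Hfprop : eproper f) (Hfconv : convex_efun f) (Hflsc : elsc f)
  (HKS : forall x, S x -> (edom f)° (K *m x))
  (HfKpos : forall x, S x -> (0 < f (K *m x))%E)
  (HSAg : exists x, S x /\ (g (A *m x) < +oo)%E)
  (Hinf : (0 < ereal_inf [set (g (A *m x) + (h x)%:E)%E | x in S])%E)
  (* hypotheses of the lemma *)
  (m delta gamma : R) (Hm : 0 < m) (Hdelta : 0 < delta) (Hgamma : 0 < gamma)
  (xh : 'cV[R]_n) (yh : 'cV[R]_p) (zh : 'cV[R]_s) (uh : 'cV[R]_n) (dg : 'cV[R]_s)
  (Hyh : edom (fconj f) yh) (Hcalm : calm (fconj f) yh)
  (Hxh : S xh) (Hden : ((m / 2)%:E < denom K f xh yh)%E)
  (Hzh : (edom (fconj g))° zh) (Hdg : is_grad (fconj g) zh dg)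
  (Halpha1 : (0 < Psi A g h S delta gamma xh zh uh)%E) :
  let alpha1 := fine (Psi A g h S delta gamma xh zh uh) in
  let alpha2 := fine (denom K f xh yh) in
  exists (O1 : set 'cV[R]_n) (O2 : set 'cV[R]_p) (O3 : set 'cV[R]_s),
    [/\ open O1 /\ O1 xh,
        [/\ open O2, O2 `<=` edom (fconj f) & O2 yh],
        [/\ open O3, O3 `<=` edom (fconj g) & O3 zh],
        (forall x y, O1 x -> O2 y -> ((m / 2)%:E < denom K f x y)%E) &
        frechet4 (Gamma A K f g h S m delta gamma) xh yh zh uh =
        [set xi | [/\
           exists2 nu, subdiff (ind_fun S) xh nu &
             xi.1.1.1 = (alpha2 ^+ 2)^-1 *:
               (alpha2 *: (A^T *m zh + gradh xh + nu + delta *: (xh - uh))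
                - alpha1 *: (K^T *m yh)),
           exists2 eta, subdiff (fconj f) yh eta &
             xi.1.1.2 = (alpha2 ^+ 2)^-1 *: (alpha1 *: (eta - K *m xh)),
           xi.1.2 = alpha2^-1 *: (A *m xh - dg - gamma *: zh) &
           xi.2 = alpha2^-1 *: (delta *: (uh - xh))]]].
Proof.
have [U [_ SU HU _]] := Hh.
have Hgh := HU xh (SU xh Hxh).
by apply: main_sec.
Qed.
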